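(* Let $f:\mathbb{N}\to\mathbb{N}$ be an arbitrary non-decreasing function and let $d$ be a positive integer. There exist integers $k_0$ and $n_0$ such that if $T$ is a rooted tree of depth at most $d$ with at least $n_0$ leaves, then for some $k\le k_0$ there exists a vertex $v$ of $T$ that has at least $f(k)$ children, such that the subtree of $T$ rooted at each child of $v$ has at most $k$ leaves. *)

(* Defs.v *)
From mathcomp Require Import all_boot.
Set Implicit Arguments. Unset Strict Implicit. Unset Printing Implicit Defensive.

Inductive tree : Type := Node of seq tree.

Definition children (t : tree) : seq tree := let: Node ts := t in ts.

Fixpoint leaves (t : tree) : nat :=
  let: Node ts := t in
  if ts is [::] then 1 else sumn (map leaves ts).

Fixpoint depth (t : tree) : nat :=
  let: Node ts := t in
  if ts is [::] then 0 else (\max_(s <- map depth ts) s).+1.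

(* All vertices of t, each represented by the subtree of t rooted at it. *)
Fixpoint vertices (t : tree) : seq tree :=
  let: Node ts := t in t :: flatten (map vertices ts).

(* Main.v *)
Require Import Defs.
From mathcomp Require Import all_boot.
From Stdlib Require List.
From Stdlib Require Import Classical.

Fixpoint Bd (f : nat -> nat) (j : nat) : nat :=
  if j is j'.+1 then Bd f j' + f (Bd f j') * Bd f j' else 1.

Lemma Bd_pos f j : 0 < Bd f j.
Proof. elim: j => //= j IH; exact: (leq_trans IH (leq_addr _ _)). Qed.

Lemma Bd_mono f j : Bd f j <= Bd f j.+1.
Proof. by rewrite /= leq_addr. Qed.

Definition bad (f : nat -> nat) (k0 : nat) (T : tree) :=
  forall k, 0 < k -> k <= k0 -> forall v, List.In v (vertices T) ->
    f k <= size (children v) -> exists c, List.In c (children v) /\ k < leaves c.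

Lemma in_flat (v c : tree) ts : List.In c ts -> List.In v (vertices c) ->
  List.In v (flatten (map vertices ts)).
Proof.
elim: ts => //= x r IH [<-|Hc] Hv; apply: List.in_or_app; [left|right]; auto.
Qed.

Lemma bad_child f k0 ts c : bad f k0 (Node ts) -> List.In c ts -> bad f k0 c.
Proof.
move=> Hb Hc k Hk Hk0 v Hv Hf; apply: (Hb k Hk Hk0 v) => //=; right.
exact: in_flat Hc Hv.
Qed.

Lemma lmax c r : List.In c r -> depth c <= \max_(s <- map depth r) s.
Proof.
elim: r => //= x r IH; rewrite big_cons; case=> [<-|H]; first exact: leq_maxl.
exact: leq_trans (IH H) (leq_maxr _ _).
Qed.

Lemma depth_child ts c : List.In c ts -> depth c < depth (Node ts).
Proof.
move=> H; case: ts H => // x r H; change (depth c < (\max_(s <- map depth (x :: r)) s).+1); rewrite ltnS.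
exact: lmax.
Qed.

Lemma sum_bound ts B : (forall c, List.In c ts -> leaves c <= B) ->
  sumn (map leaves ts) <= size ts * B.
Proof.
elim: ts => //= x r IH H; rewrite mulSn leq_add //; first by apply: H; left.
by apply: IH => c Hc; apply: H; right.
Qed.

Lemma main f k0 j : forall T, bad f k0 T -> Bd f j <= k0 -> depth T <= j ->
  leaves T <= Bd f j.
Proof.
elim: j => [|j IH] [ts] Hb Hk Hd.
  by case: ts Hb Hd.
case: ts Hb Hd => [|x r] Hb Hd; first exact: Bd_pos.
set ts := x :: r in Hb Hd *.
have Hch : forall c, List.In c ts -> leaves c <= Bd f j.
  move=> c Hc; apply: IH.
  - exact: bad_child Hb Hc.
  - exact: leq_trans (Bd_mono f j) Hk.
  - by rewrite -ltnS; apply: leq_trans (@depth_child ts c Hc) Hd.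
have Hs : size ts < f (Bd f j).
  rewrite ltnNge; apply/negP => Hf.
  have [c [Hc Hl]] := Hb (Bd f j) (Bd_pos f j) (leq_trans (Bd_mono f j) Hk)
    (Node ts) (or_introl erefl) Hf.
  by move: (Hch c Hc); rewrite leqNgt Hl.
change (leaves (Node ts)) with (sumn (map leaves ts)).
apply: leq_trans (@sum_bound ts (Bd f j) Hch) _.
apply: leq_trans (leq_addl (Bd f j) _).
by rewrite leq_mul2r ltnW ?orbT.
Qed.

Theorem lemma3p8 (f : nat -> nat) (f_mono : {homo f : m n / m <= n})
    (d : nat) (d_pos : 0 < d) :
  exists k0 n0 : nat, forall T : tree,
    depth T <= d -> n0 <= leaves T ->
    exists k : nat, [/\ 0 < k, k <= k0 &
      exists v : tree, [/\ List.In v (vertices T),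
        f k <= size (children v) &
        forall c : tree, List.In c (children v) -> leaves c <= k]].
Proof.
exists (Bd f d), (Bd f d).+1 => T Hd Hn.
apply: NNPP => H.
have Hb : bad f (Bd f d) T.
  move=> k Hk Hk0 v Hv Hf; apply: NNPP => Hn'; apply: H; exists k; split => //.
  exists v; split => // c Hc; rewrite leqNgt; apply/negP => Hl.
  by apply: Hn'; exists c.
by move: (@main f (Bd f d) d T Hb (leqnn _) Hd); rewrite leqNgt Hn.
Qed.
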